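(* Let $A,B\subseteq\mathbb{R}^n$ be finite nonempty sets (Euclidean metric), $\beta>0$ and $\delta>d^N_P(A,B)$. For all $r>0$ and $s>\delta$, $$\overline{\mathrm{Cr}}^\beta_{r,s}(A)\subseteq\overline{\mathrm{Cr}}^\beta_{r',s-\delta}(B),\qquad \overline{\mathrm{Cr}}^\beta_{r,s}(B)\subseteq\overline{\mathrm{Cr}}^\beta_{r',s-\delta}(A),$$ $$\overline{\mathrm{DCr}}^\beta_{r,s}(A)\subseteq\overline{\mathrm{DCr}}^\beta_{r'',s-\delta}(B),\qquad \overline{\mathrm{DCr}}^\beta_{r,s}(B)\subseteq\overline{\mathrm{DCr}}^\beta_{r'',s-\delta}(A),$$ where $r'=\max\{2(r+\beta\delta),(1+\beta^{-1})r+\delta\}$ and $r''=\max\{1,2\beta\}\big((1+\beta^{-1})r+\delta\big)$.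
   Context: $d$ Euclidean, $\bar B_d(x,r)=\{y:d(x,y)\le r\}$. For finite $A$, $k>0$, $x\in\mathbb{R}^n$, $\mathrm{core}^A_k(x)$ is the distance from $x$ to its $\lceil k\rceil$-th nearest neighbor in $A$ (each point of $A$ counted once, $x$ itself counting if $x\in A$); equivalently $\min\{r\ge0:|\bar B_d(x,r)\cap A|\ge k\}$, and $\infty$ if $k>|A|$. For $\beta>0$: $\Lambda^\beta_k(a,x)=\max\{\beta\,\mathrm{core}^A_k(a),d(a,x)\}$, $B^\beta_{r,k}(a)=\{x:\Lambda^\beta_k(a,x)\le r\}$, $\mathrm{Cr}^\beta_{r,k}(A)=\bigcup_{a\in A}B^\beta_{r,k}(a)$, $\mathrm{Vor}_A(a)=\{x:d(a,x)\le d(a',x)\ \forall a'\in A\}$, $\mathrm{DCr}^\beta_{r,k}(A)=\bigcup_{a\in A}\big(B^\beta_{r,k}(a)\cap\mathrm{Vor}_A(a)\big)$. Normalized versions: $\overline{\mathrm{Cr}}^\beta_{r,s}(A)=\mathrm{Cr}^\beta_{r,s|A|}(A)$ and $\overline{\mathrm{DCr}}^\beta_{r,s}(A)=\mathrm{DCr}^\beta_{r,s|A|}(A)$ for $r,s>0$ (similarly for $B$). For $S\subseteq\mathbb{R}^n$, $\delta\ge0$: $S^\delta=\bigcup_{x\in S}\bar B_d(x,\delta)$. Normalized Prohorov distance: $d^N_P(A,B)=\sup_{S\text{ closed}}\inf\{\delta\ge0:\tfrac{|S\cap A|}{|A|}\le\tfrac{|S^\delta\cap B|}{|B|}+\delta\text{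 and }\tfrac{|S\cap B|}{|B|}\le\tfrac{|S^\delta\cap A|}{|A|}+\delta\}$. *)

(* Defs.v *)
From HB Require Import structures.
From mathcomp Require Import all_boot all_order all_algebra.
From mathcomp Require Import finmap.
From mathcomp Require Import all_classical all_reals all_analysis.
Set Implicit Arguments. Unset Strict Implicit. Unset Printing Implicit Defensive.
Import Order.TTheory GRing.Theory Num.Theory.
Import numFieldNormedType.Exports.
Local Open Scope classical_set_scope.
Local Open Scope ring_scope.

Section Defs.
Variables (R : realType) (n : nat).
Notation pt := 'rV[R]_n.

Definition edist (x y : pt) : R := Num.sqrt (\sum_(i < n) (x ord0 i - y ord0 i) ^+ 2).

Definition cnt (S : set pt) (A : {fset pt}) : nat :=
  #|` [fset a in A | `[< S a >]]%fset |.

Definition cball (x : pt) (r : R) : set pt := [set y | edist x y <= r].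

(* core^A_k(x) = min{ r >= 0 : |B(x,r) ∩ A| >= k }, +oo if no such r *)
Definition core (A : {fset pt}) (k : R) (x : pt) : \bar R :=
  ereal_inf [set r%:E | r in [set r : R | 0 <= r /\ k <= (cnt (cball x r) A)%:R]].

Definition Lambda (A : {fset pt}) (beta k : R) (a x : pt) : \bar R :=
  maxe (beta%:E * core A k a)%E (edist a x)%:E.

Definition Bbeta (A : {fset pt}) (beta r k : R) (a : pt) : set pt :=
  [set x | (Lambda A beta k a x <= r%:E)%E].

Definition Cr (A : {fset pt}) (beta r k : R) : set pt :=
  \bigcup_(a in [set a | a \in A]) Bbeta A beta r k a.

Definition Vor (A : {fset pt}) (a : pt) : set pt :=
  [set x | forall a', a' \in A -> edist a x <= edist a' x].

Definition DCr (A : {fset pt}) (beta r k : R) : set pt :=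
  \bigcup_(a in [set a | a \in A]) (Bbeta A beta r k a `&` Vor A a).

Definition nCr (A : {fset pt}) (beta r s : R) : set pt :=
  Cr A beta r (s * (#|` A |)%:R).
Definition nDCr (A : {fset pt}) (beta r s : R) : set pt :=
  DCr A beta r (s * (#|` A |)%:R).

Definition thick (S : set pt) (d : R) : set pt :=
  \bigcup_(x in S) cball x d.

Definition frac (S : set pt) (A : {fset pt}) : R :=
  (cnt S A)%:R / (#|` A |)%:R.

Definition prohorovN (A B : {fset pt}) : \bar R :=
  ereal_sup [set ereal_inf [set d%:E | d in [set d : R | 0 <= d /\
      frac S A <= frac (thick S d) B + d /\
      frac S B <= frac (thick S d) A + d]] | S in [set S : set pt | closed S]].

End Defs.

(* Main.v *)
Require Import Defs.
From HB Require Import structures.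
From mathcomp Require Import all_boot all_order all_algebra.
From mathcomp Require Import finmap.
From mathcomp Require Import all_classical all_reals all_analysis.
From mathcomp Require Import ring lra.
Import Order.TTheory GRing.Theory Num.Theory.
Import numFieldNormedType.Exports.
Set Implicit Arguments. Unset Strict Implicit.
Local Open Scope classical_set_scope.
Local Open Scope ring_scope.

Section S.
Variables (R : realType) (n : nat).
Notation pt := 'rV[R]_n.
Notation edist := (@Defs.edist R n).
Notation frac := (@Defs.frac R n).
Notation cnt := (@Defs.cnt R n).
Notation core := (@Defs.core R n).
Notation cball := (@Defs.cball R n).
Notation thick := (@Defs.thick R n).
Notation nCr := (@Defs.nCr R n).
Notation nDCr := (@Defs.nDCr R n).
Notation Lambda := (@Defs.Lambda R n).

Lemma edist_ge0 (x y : pt) : 0 <= edist x y.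
Proof. exact: sqrtr_ge0. Qed.

Lemma edistC (x y : pt) : edist x y = edist y x.
Proof. by rewrite /Defs.edist; congr Num.sqrt; apply: eq_bigr => i _; rewrite -sqrrN opprB. Qed.

Lemma CS (u v : 'I_n -> R) :
  (\sum_i u i * v i) ^+ 2 <= (\sum_i u i ^+ 2) * (\sum_i v i ^+ 2).
Proof.
set a := \sum_i u i ^+ 2; set b := \sum_i u i * v i; set c := \sum_i v i ^+ 2.
have a0 : 0 <= a by apply: sumr_ge0 => i _; exact: sqr_ge0.
have c0 : 0 <= c by apply: sumr_ge0 => i _; exact: sqr_ge0.
have key : forall t, 0 <= t ^+ 2 * a - 2 * t * b + c.
  move=> t; have -> : t ^+ 2 * a - 2 * t * b + c = \sum_i (t * u i - v i) ^+ 2.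
    rewrite (eq_bigr (fun i => t^+2 * u i^+2 - 2*t*(u i * v i) + v i ^+2)); last by move=> i _; ring.
    by rewrite !big_split /= sumrN -!mulr_sumr.
  by apply: sumr_ge0 => i _; exact: sqr_ge0.
have [az|ap] := eqVneq a 0.
  have u0 : forall i, u i = 0.
    move=> i; apply/eqP; rewrite -sqrf_eq0; apply/eqP.
    by move/eqP: az; rewrite psumr_eq0 => [/allP/(_ i (mem_index_enum _))/implyP/(_ isT)/eqP|j _] //; exact: sqr_ge0.
  have -> : b = 0 by rewrite /b big1 // => i _; rewrite u0 mul0r.
  by rewrite expr0n /= mulr_ge0.
have ap' : 0 < a by rewrite lt_def ap a0.
have := key (b / a).
have -> : (b / a) ^+ 2 * a - 2 * (b / a) * b + c = c - b ^+ 2 / a.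
  by field; rewrite ap.
rewrite subr_ge0 ler_pdivrMr // => h; by rewrite mulrC.
Qed.

Lemma edist_tri (x y z : pt) : edist x z <= edist x y + edist y z.
Proof.
rewrite /Defs.edist.
set u := fun i : 'I_n => x ord0 i - y ord0 i.
set v := fun i : 'I_n => y ord0 i - z ord0 i.
have -> : \sum_(i < n) (x ord0 i - z ord0 i) ^+ 2 = \sum_i (u i + v i) ^+ 2.
  by apply: eq_bigr => i _; rewrite /u /v; congr (_ ^+ 2); ring.
rewrite -/(\sum_i (u i) ^+ 2) -/(\sum_i (v i) ^+ 2).
set a := \sum_i u i ^+ 2; set c := \sum_i v i ^+ 2.
have a0 : 0 <= a by apply: sumr_ge0 => i _; exact: sqr_ge0.
have c0 : 0 <= c by apply: sumr_ge0 => i _; exact: sqr_ge0.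
have hb : \sum_i u i * v i <= Num.sqrt a * Num.sqrt c.
  rewrite -sqrtrM //; apply: le_trans (ler_norm _) _.
  rewrite -sqrtr_sqr; apply: ler_wsqrtr; exact: CS.
have -> : \sum_i (u i + v i) ^+ 2 = a + 2 * \sum_i u i * v i + c.
  rewrite /a /c mulr_sumr -!big_split /=; apply: eq_bigr => i _; ring.
rewrite -[X in _ <= X]ger0_norm ?addr_ge0 ?sqrtr_ge0 // -sqrtr_sqr.
apply: ler_wsqrtr.
rewrite sqrrD !sqr_sqrtr //.
have : 2 * (\sum_i u i * v i) <= 2 * (Num.sqrt a * Num.sqrt c) by rewrite ler_wpM2l.
by rewrite mulr_natl => h; lra.
Qed.

Lemma cnt_le (P Q : set pt) (A : {fset pt}) :
  (forall y, y \in A -> P y -> Q y) -> (cnt P A <= cnt Q A)%N.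
Proof.
move=> H; rewrite /cnt; apply: fsubset_leq_card; apply/fsubsetP => y.
rewrite !inE => /andP[yA /asboolP Py]; rewrite yA /=; apply/asboolP; exact: H.
Qed.

Lemma cnt_gt0 (P : set pt) (A : {fset pt}) :
  (0 < cnt P A)%N -> exists2 y, y \in A & P y.
Proof.
rewrite /cnt cardfs_gt0 => /fset0Pn[y]; rewrite !inE => /andP[yA /asboolP Py].
by exists y.
Qed.

Lemma core_ub (B : {fset pt}) (k u : R) (b : pt) :
  0 <= u -> k <= (cnt (cball b u) B)%:R -> (core B k b <= u%:E)%E.
Proof. by move=> u0 hk; apply: ge_ereal_inf; exists u%:E => //; exists u. Qed.

Lemma core_fin (A : {fset pt}) (beta k r : R) (a : pt) : 0 < beta ->
  (beta%:E * core A k a <= r%:E)%E ->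
  exists c, [/\ core A k a = c%:E, 0 <= c & beta * c <= r].
Proof.
move=> b0 h.
have c0 : (0 <= core A k a)%E.
  by apply: le_ereal_inf_tmp => _ [u [u0 _] <-]; rewrite lee_fin.
move: h c0; case: (core A k a) => [c| |] h c0.
- by exists c; split => //; rewrite -lee_fin EFinM.
- by move: h; rewrite mulry gtr0_sg // mul1e.
- by [].
Qed.

Lemma core_adh (A : {fset pt}) (k c e : R) (a : pt) :
  core A k a = c%:E -> 0 < e ->
  exists rho, [/\ 0 <= rho, k <= (cnt (cball a rho) A)%:R & rho < c + e].
Proof.
move=> hc e0; have fin : core A k a \is a fin_num by rewrite hc.
have [_ [rho [r0 hk] <-]] := lb_ereal_inf_adherent e0 fin.
by rewrite -/(core A k a) hc -EFinD lte_fin => h; exists rho.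
Qed.

Lemma closed_fset (F : {fset pt}) : closed [set x : pt | x \in F].
Proof.
have hT : accessible_space pt by apply: hausdorff_accessible; exact: norm_hausdorff.
exact: (proj1 accessible_finite_set_closed hT _ (finite_fset F)).
Qed.

Lemma pro_ext (A B : {fset pt}) (dl : R) : (prohorovN A B < dl%:E)%E ->
  forall S, closed S -> exists d, [/\ 0 <= d, d < dl,
    frac S A <= frac (thick S d) B + d & frac S B <= frac (thick S d) A + d].
Proof.
move=> hp S cS.
have := le_lt_trans (@ereal_sup_ubound R _ _ (ex_intro2 _ _ S cS erefl)) hp.
move=> /ereal_inf_lt[_ [d [d0 [h1 h2]] <-]]; rewrite lte_fin => ddl.
by exists d.
Qed.

Lemma transfer (A B : {fset pt}) (dl delta s c : R) (a : pt) :
  A != fset0 -> B != fset0 ->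
  (forall S : set pt, closed S -> exists d, [/\ 0 <= d, d < dl & frac S A <= frac (thick S d) B + d]) ->
  dl < delta -> delta < s -> core A (s * (#|`A|)%:R) a = c%:E ->
  exists t b, [/\ 0 <= t, t < c + delta, 0 < delta, b \in B & edist a b <= t /\
     (s - delta) * (#|`B|)%:R <= (cnt (cball a t) B)%:R].
Proof.
move=> hA hB hP hdl hs hc.
have e0 : 0 < delta - dl by rewrite subr_gt0.
have [rho [r0 hk hrc]] := core_adh hc e0.
pose F := [fset y in A | `[< cball a rho y >]]%fset.
have [d [d0 ddl hf]] := hP _ (@closed_fset F).
have Apos : 0 < (#|`A|)%:R :> R by rewrite ltr0n cardfs_gt0.
have Bpos : 0 < (#|`B|)%:R :> R by rewrite ltr0n cardfs_gt0.
have hSA : s <= frac [set x | x \in F] A.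
  rewrite /Defs.frac ler_pdivlMr //; apply: le_trans hk _; rewrite ler_nat.
  by apply: cnt_le => y yA hy; rewrite /mkset /F !inE yA /=; exact/asboolP.
have hthick : (cnt (thick [set x | x \in F] d) B <= cnt (cball a (rho + d)) B)%N.
  apply: cnt_le => y _ [z zF hzy]; move: zF; rewrite /mkset /F !inE => /andP[_ /asboolP hz].
  rewrite /Defs.cball /= in hz hzy *.
  by apply: le_trans (edist_tri a z y) _; exact: lerD.
have hc2 : (s - delta) * (#|`B|)%:R <= (cnt (cball a (rho + d)) B)%:R.
  apply: (@le_trans _ _ ((cnt (thick [set x | x \in F] d) B)%:R)); last by rewrite ler_nat.
  have -> : (cnt (thick [set x | x \in F] d) B)%:R = frac (thick [set x | x \in F] d) B * (#|`B|)%:R.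
    by rewrite /Defs.frac divfK // gt_eqF.
  by rewrite ler_wpM2r ?ltW //; lra.
have dpos : 0 < delta by lra.
have [b bB hb] : exists2 b, b \in B & cball a (rho + d) b.
  apply: cnt_gt0; rewrite -(ltr0n R); apply: lt_le_trans hc2.
  by apply: mulr_gt0 => //; rewrite subr_gt0.
exists (rho + d), b; split => //; first by rewrite addr_ge0.
lra.
Qed.

Lemma seq_min (l : seq pt) (x : pt) : l != [::] ->
  exists2 b, b \in l & forall b', b' \in l -> edist b x <= edist b' x.
Proof.
elim: l => [//|y l IH] _.
have [->|ln] := eqVneq l [::].
  by exists y; rewrite ?mem_seq1 // => b'; rewrite mem_seq1 => /eqP ->.
have [b bl hb] := IH ln.
have [yb|by'] := leP (edist y x) (edist b x).
  exists y; first by rewrite mem_head.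
  move=> b'; rewrite in_cons => /orP[/eqP ->//|/hb]; exact: le_trans.
exists b; first by rewrite in_cons bl orbT.
move=> b'; rewrite in_cons => /orP[/eqP ->|/hb//]; exact: ltW.
Qed.

Lemma nearest (B : {fset pt}) (x : pt) : B != fset0 ->
  exists2 b, b \in B & forall b', b' \in B -> edist b x <= edist b' x.
Proof.
move=> hB; have hl : enum_fset B != [::].
  move: hB; apply: contra => /eqP h; apply/eqP/fsetP => y.
  by rewrite inE -[y \in B]/(y \in enum_fset B) h.
have [b bl hb] := seq_min x hl; exists b => //.
Qed.

Lemma Lam_split (A : {fset pt}) (beta k r : R) (a x : pt) :
  (Lambda A beta k a x <= r%:E)%E =
  ((beta%:E * core A k a <= r%:E)%E && (edist a x <= r)).
Proof. by rewrite /Defs.Lambda ge_max lee_fin. Qed.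

Section Dir.
Variables (A B : {fset pt}) (dl delta beta : R).
Hypotheses (hA : A != fset0) (hB : B != fset0) (hb : 0 < beta) (hdl : dl < delta).
Hypothesis hP : forall S : set pt, closed S ->
  exists d, [/\ 0 <= d, d < dl & frac S A <= frac (thick S d) B + d].

Lemma Cr_dir (r s : R) : 0 < r -> delta < s ->
  nCr A beta r s `<=` nCr B beta (Num.max (2 * (r + beta * delta)) ((1 + beta^-1) * r + delta)) (s - delta).
Proof.
move=> r0 hs x [a aA]; rewrite /Defs.Bbeta /= Lam_split => /andP[h1 h2].
have [c [hc c0 bc]] := core_fin hb h1.
have [t [b [t0 htc d0 bB [hab hcnt]]]] := transfer hA hB hP hdl hs hc.
have hcr : c <= beta^-1 * r by rewrite mulrC ler_pdivlMr // mulrC.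
have bt : beta * t <= beta * (c + delta) by rewrite ler_wpM2l ?ltW ?ltW.
exists b => //; rewrite /Defs.Bbeta /= Lam_split; apply/andP; split.
- apply: (@le_trans _ _ (beta%:E * (2 * t)%:E)%E).
    apply: lee_wpmul2l; first by rewrite lee_fin ltW.
    apply: core_ub; first by rewrite mulr_ge0.
    apply: le_trans hcnt _; rewrite ler_nat; apply: cnt_le => y _ hy.
    rewrite /Defs.cball /= in hy *.
    have := edist_tri b a y; rewrite edistC in hab; lra.
  rewrite -EFinM lee_fin le_max; apply/orP; left; lra.
- rewrite le_max; apply/orP; right.
  have := edist_tri b a x; rewrite edistC in hab; rewrite mulrDl mul1r; lra.
Qed.

Lemma DCr_dir (r s : R) : 0 < r -> delta < s ->
  nDCr A beta r s `<=` nDCr B beta (Num.max 1 (2 * beta) * ((1 + beta^-1) * r + delta)) (s - delta).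
Proof.
move=> r0 hs x [a aA [hx hv]]; move: hx; rewrite /Defs.Bbeta /= Lam_split => /andP[h1 h2].
have [c [hc c0 bc]] := core_fin hb h1.
have [t [b1 [t0 htc d0 b1B [hab hcnt]]]] := transfer hA hB hP hdl hs hc.
have hcr : c <= beta^-1 * r by rewrite mulrC ler_pdivlMr // mulrC.
have bt : beta * t <= beta * (c + delta) by rewrite ler_wpM2l ?ltW ?ltW.
have [b bB hmin] := nearest x hB.
set m := Num.max 1 (2 * beta); set M := (1 + beta^-1) * r + delta.
have hM : M = r + beta^-1 * r + delta by rewrite /M mulrDl mul1r.
have m1 : 1 <= m by rewrite le_max lexx.
have m2 : 2 * beta <= m by rewrite le_max lexx orbT.
have ib : 0 <= beta^-1 by rewrite invr_ge0 ltW.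
have M0 : 0 <= M by rewrite hM; have := mulr_ge0 ib (ltW r0); lra.
have hmM : M <= m * M.
  have : 0 <= (m - 1) * M by rewrite mulr_ge0 // subr_ge0.
  rewrite mulrBl mul1r; lra.
have hmM2 : 2 * beta * M <= m * M by rewrite ler_wpM2r.
have hbM : 2 * beta * M = 2 * beta * r + 2 * r + 2 * beta * delta.
  have bi : beta * beta^-1 = 1 by rewrite mulfV ?gt_eqF.
  rewrite hM; transitivity (2*beta*r + 2*(beta*beta^-1)*r + 2*beta*delta); first ring.
  by rewrite bi mulr1.
have hbx : edist b x <= t + r.
  apply: le_trans (hmin _ b1B) _; have := edist_tri b1 a x; rewrite edistC in hab; lra.
rewrite /Defs.nDCr /Defs.DCr; exists b => //; split; last by rewrite /Defs.Vor => a' ha'; exact: hmin.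
rewrite /Defs.Bbeta /= Lam_split; apply/andP; split; last by lra.
apply: (@le_trans _ _ (beta%:E * (2 * t + 2 * r)%:E)%E).
  apply: lee_wpmul2l; first by rewrite lee_fin ltW.
  apply: core_ub; first by lra.
  apply: le_trans hcnt _; rewrite ler_nat; apply: cnt_le => y _ hy.
  rewrite /Defs.cball /= in hy *.
  have := edist_tri b a y; have := edist_tri b x a; rewrite (edistC x a); lra.
rewrite -EFinM lee_fin.
have : beta * (2 * t + 2 * r) = 2 * (beta * t) + 2 * beta * r by ring.
have : beta * (c + delta) = beta * c + beta * delta by ring.
lra.
Qed.
End Dir.
End S.

Theorem mainTheorem9 (R : realType) (n : nat) (A B : {fset 'rV[R]_n})
  (hA : A != fset0) (hB : B != fset0) (beta delta : R) (hbeta : 0 < beta)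
  (hdelta : (prohorovN A B < delta%:E)%E) :
  forall r s : R, 0 < r -> delta < s ->
  let r' := Num.max (2 * (r + beta * delta)) ((1 + beta^-1) * r + delta) in
  let r'' := Num.max 1 (2 * beta) * ((1 + beta^-1) * r + delta) in
  [/\ nCr A beta r s `<=` nCr B beta r' (s - delta),
      nCr B beta r s `<=` nCr A beta r' (s - delta),
      nDCr A beta r s `<=` nDCr B beta r'' (s - delta)
    & nDCr B beta r s `<=` nDCr A beta r'' (s - delta)].
Proof.
move=> r s r0 hs r' r''.
have [dl hpdl hdl] : exists2 dl : R, (prohorovN A B < dl%:E)%E & dl < delta.
  move: hdelta; case: (prohorovN A B) => [p| |] h.
  - exists ((p + delta) / 2); move: h; rewrite !lte_fin => h; lra.
  - by [].
  - by exists (delta - 1); [rewrite ltNye | lra].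
have hP1 : forall S : set 'rV[R]_n, closed S -> exists d,
    [/\ 0 <= d, d < dl & Defs.frac S A <= Defs.frac (Defs.thick S d) B + d].
  by move=> S cS; have [d [h1 h2 h3 h4]] := pro_ext hpdl cS; exists d.
have hP2 : forall S : set 'rV[R]_n, closed S -> exists d,
    [/\ 0 <= d, d < dl & Defs.frac S B <= Defs.frac (Defs.thick S d) A + d].
  by move=> S cS; have [d [h1 h2 h3 h4]] := pro_ext hpdl cS; exists d.
split.
- exact: (Cr_dir hA hB hbeta hdl hP1 r0 hs).
- exact: (Cr_dir hB hA hbeta hdl hP2 r0 hs).
- exact: (DCr_dir hA hB hbeta hdl hP1 r0 hs).
- exact: (DCr_dir hB hA hbeta hdl hP2 r0 hs).
Qed.
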